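(* Let $\hat U_i=\mathrm{sign}(Y_i-\hat Q(X_i))$. Then $$\hat\psi_{\mathrm T}^+\le\frac{\mathbb P_n(Y-\hat Q(X))Z\big(1+\Lambda^{\hat U}(1-\hat e(X))/\hat e(X)\big)+\mathbb P_n\hat Q(X)Z/\hat e(X)}{\mathbb P_nZ/\hat e(X)}.$$
   Context: Data $(X_i,Y_i,Z_i)_{i\le n}$; $\mathbb P_n f=\frac1n\sum_if(X_i,Y_i,Z_i)$; $\Lambda\ge1$, $\tau=\Lambda/(\Lambda+1)$; $\hat e(X_i)\in(0,1)$ for all $i$; $\hat Q:\mathcal X\to\mathbb R$ is an estimate of the conditional $\tau$-quantile of $Y$ given $X$ and $Z=1$; $\mathrm{sign}(0)=0$. $\mathcal E_n(\Lambda)=\{\bar e\in\mathbb R^n:\Lambda^{-1}\le\frac{\bar e_i/(1-\bar e_i)}{\hat e(X_i)/(1-\hat e(X_i))}\le\Lambda\ \forall i\}$, and $\hat\psi_{\mathrm T}^+=\max_{\bar e\in\mathcal E_n(\Lambda)}\frac{\sum_iY_iZ_i/\bar e_i}{\sum_iZ_i/\bar e_i}$ subject to $\frac1n\sum_i\hat Q(X_i)Z_i/\bar e_i=\frac1n\sum_i\hat Q(X_i)Z_i/\hat e(X_i)$ and $\frac1n\sum_iZ_i/\bar e_i=\frac1n\sum_iZ_i/\hat e(X_i)$. *)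

(* Defs.v *)
From mathcomp Require Import all_boot all_order all_algebra.
Set Implicit Arguments. Unset Strict Implicit. Unset Printing Implicit Defensive.
Import Order.TTheory GRing.Theory Num.Theory.
Local Open Scope ring_scope.

Section Defs.
Variable R : realFieldType.

Definition Pn (n : nat) (f : 'I_n -> R) : R := n%:R^-1 * \sum_(i < n) f i.

Definition odds (e : R) : R := e / (1 - e).

Definition in_En (n : nat) (Lam : R) (eh : 'I_n -> R) (ebar : 'I_n -> R) : Prop :=
  forall i : 'I_n, Lam^-1 <= odds (ebar i) / odds (eh i) <= Lam.

Definition psiT_obj (n : nat) (Y Z ebar : 'I_n -> R) : R :=
  (\sum_(i < n) Y i * Z i / ebar i) / (\sum_(i < n) Z i / ebar i).

(* feasibility for the optimisation problem defining psi_T^+ *)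
Definition psiT_feasible (n : nat) (Lam : R) (Q eh Z ebar : 'I_n -> R) : Prop :=
  [/\ in_En Lam eh ebar,
      Pn (fun i => Q i * Z i / ebar i) = Pn (fun i => Q i * Z i / eh i) &
      Pn (fun i => Z i / ebar i) = Pn (fun i => Z i / eh i)].

Definition sign (x : R) : int := sgz x.
End Defs.

(* Main.v *)
Require Import Defs.
From mathcomp Require Import all_boot all_order all_algebra ring lra.
Import Order.TTheory GRing.Theory Num.Theory.
Import Order.TTheory GRing.Theory Num.Theory.
Local Open Scope ring_scope.
Lemma odds_pos (R : realFieldType) (x : R) : 0 < odds x -> 0 < x < 1.
Proof.
rewrite /odds => h.
have [h1|h1|h1] := ltgtP (1 - x) 0.
- have : x / (1 - x) < 0.
    have x0 : 0 < x by lra.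
    by rewrite pmulr_rlt0 ?invr_lt0 //; lra.
  lra.
- have : 0 < x / (1 - x) * (1 - x) by apply: mulr_gt0.
  rewrite divfK; first lra.
  by rewrite gt_eqF.
- by move: h; rewrite h1 invr0 mulr0 ltxx.
Qed.

Lemma term (R : realFieldType) (Lam e eb d z : R) : 1 <= Lam -> 0 < e < 1 ->
  Lam^-1 <= odds eb / odds e <= Lam -> (z = 0 \/ z = 1) ->
  d * z / eb <= d * z * (1 + Lam ^ (sign d) * (1 - e) / e).
Proof.
move=> hL /andP[e0 e1] /andP[r1 r2] hz.
have L0 : 0 < Lam by lra.
have q0 : 0 < odds e by rewrite /odds divr_gt0 // subr_gt0.
have p0 : 0 < odds eb.
  have : 0 < odds eb / odds e by apply: lt_le_trans r1; rewrite invr_gt0.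
  by rewrite pmulr_lgt0 // invr_gt0.
have /andP[eb0 eb1] := @odds_pos _ _ p0.
have qi : (odds e)^-1 = (1 - e) / e.
  by rewrite /odds invfM invrK mulrC.
have pi : (odds eb)^-1 = (1 - eb) / eb.
  by rewrite /odds invfM invrK mulrC.
have ebi : eb^-1 = 1 + (1 - eb) / eb.
  by field; lra.
have c1 : (1 - eb) / eb <= Lam * ((1 - e) / e).
{ rewrite -pi -qi -[Lam]invrK -invfM lef_pV2 ?posrE ?mulr_gt0 ?invr_gt0 //; try lra.
  by rewrite -ler_pdivlMr. }
have c2 : Lam^-1 * ((1 - e) / e) <= (1 - eb) / eb.
{ rewrite -pi -qi -invfM lef_pV2 ?posrE ?mulr_gt0 ?invr_gt0 //; try lra.
  by rewrite -ler_pdivrMr // mulrC. }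
rewrite -mulrA ebi mulrA. rewrite -(mulrA (Lam ^ sign d)).
set c := (1 - eb) / eb in c1 c2 *.
set r := (1 - e) / e in c1 c2 *.
case: hz => ->; first by rewrite !mulr0 !mul0r.
rewrite !mulr1 /sign.
have [dp|dn|->] := ltgtP d 0.
- rewrite ltr0_sgz // exprN1 ler_nM2l //; lra.
- rewrite gtr0_sgz // expr1z ler_pM2l //; lra.
- by rewrite !mul0r.
Qed.

Theorem lemma2 (R : realFieldType) (T : Type) (n : nat)
  (X : 'I_n -> T) (Y Z : 'I_n -> R) (Lam : R) (ehat Qhat : T -> R) :
  1 <= Lam ->
  (forall i, 0 < ehat (X i) < 1) ->
  (forall i, Z i = 0 \/ Z i = 1) ->
  forall ebar : 'I_n -> R,
    psiT_feasible Lam (fun i => Qhat (X i)) (fun i => ehat (X i)) Z ebar ->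
    psiT_obj Y Z ebar <=
      (Pn (fun i => (Y i - Qhat (X i)) * Z i *
                    (1 + Lam ^ (sign (Y i - Qhat (X i))) * (1 - ehat (X i)) / ehat (X i)))
       + Pn (fun i => Qhat (X i) * Z i / ehat (X i)))
      / Pn (fun i => Z i / ehat (X i)).
Proof.
case: n X Y Z => [|n] X Y Z hL he hZ eb [hE hQ hW].
  by rewrite /psiT_obj /Pn !big_ord0 !(mul0r, mulr0, addr0, invr0).
move: hQ hW; rewrite /psiT_obj /Pn.
set k := (n.+1)%:R^-1.
have k0 : k != 0 by rewrite invr_eq0 pnatr_eq0.
move=> /(mulfI k0) hQ /(mulfI k0) hW.
have E : forall x y : R, (k * x) / (k * y) = x / y.
  by move=> x y; rewrite invfM mulrACA (mulfV k0); exact: mul1r.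
rewrite -mulrDr E hW.
set D := \sum_(i < n.+1) Z i / ehat (X i).
have D0 : 0 <= D.
  apply: sumr_ge0 => i _; have /andP[e0 _] := he i.
  case: (hZ i) => ->; rewrite ?mul0r // mul1r invr_ge0; exact: ltW.
apply: ler_wpM2r; first by rewrite invr_ge0.
have -> : \sum_(i < n.+1) Y i * Z i / eb i =
   \sum_(i < n.+1) (Y i - Qhat (X i)) * Z i / eb i + \sum_(i < n.+1) Qhat (X i) * Z i / eb i.
  by rewrite -big_split /=; apply: eq_bigr => i _; ring.
rewrite hQ lerD2r; apply: ler_sum => i _.
exact: term.
Qed.
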